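(* Fix $n$. For every $\breve x\in\mathcal S^n$ and every $\breve z\in\breve{\mathcal Z}^n(\breve x)$ there exists $u=(u^c,u^s)\in\Delta_I\times\Delta_J$ (depending on $\breve x,\breve z$) such that $$b^n(\breve x,\breve z)=h^n-B^n_1\big(\breve x-\langle e,\breve x\rangle^+u^c\big)+B^n_2u^s\langle e,\breve x\rangle^-+\breve\zeta^n(\breve x,\breve z)\big(B^n_1u^c+B^n_2u^s\big).$$ Moreover, for the matrices $B^n_1,B^n_2$ associated with any fixed $(\hat\imath,\hat\jmath)\in\mathcal E$, the column $\hat\jmath$ of $B^n_2$ is identically zero, and there is an ordering of the classes in which $\hat\imath$ is last such that, in that ordering, $B^n_1$ is lower triangular with positive diagonal entries and its last diagonal entry equals $\mu^n_{\hat\imath\hat\jmath}$.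
   Context: Network: $\mathcal I=\{1,\dots,I\}$, $\mathcal J=\{1,\dots,J\}$, edges $\mathcal E\subset\mathcal I\times\mathcal J$ with the bipartite graph $\mathcal G=(\mathcal I\cup\mathcal J,\mathcal E)$ a tree; $i\sim j$ iff $(i,j)\in\mathcal E$, $\mathcal J(i)=\{j:i\sim j\}$, $\mathcal I(j)=\{i:i\sim j\}$; $\mathbb R^{\mathcal G}$ (resp. $\mathbb Z^{\mathcal G}_+$) are arrays $[z_{ij}]\in\mathbb R^{I\times J}$ (resp. with nonnegative integer entries) vanishing for $i\not\sim j$. For each $n$: arrival rates $\lambda^n_i>0$, service rates $\mu^n_{ij}>0$, pool sizes $N^n_j\in\mathbb N$, with the Halfin–Whitt asymptotics $\lambda^n_i/n\to\lambda_i>0$, $N^n_j/n\to\nu_j>0$, $\mu^n_{ij}\to\mu_{ij}>0$, and $(\lambda^n_i-n\lambda_i)/\sqrt n$, $\sqrt n(\mu^n_{ij}-\mu_{ij})$, $\sqrt n(N^n_j/n-\nu_j)$ convergent. Complete resource pooling: the LP ''minimize $\max_j\sum_i\xi_{ij}$ over nonnegative $\xi\in\mathbb R^{\mathcal G}$ subject to $\sum_j\mu_{ij}\nu_j\xi_{ij}=\lambda_i$ $\forall i$'' has a unique solution $\xi^*$, with $\sum_i\xi^*_{ij}=1$ for all $j$ and $\xi^*_{ij}>0$ for $i\sim j$. The map $\Psi$ and matrices: let $\mathcal D=\{(\alpha,\beta)\in\mathbb R^I\times\mathbb R^J:\sum_i\alpha_i=\sum_j\beta_j\}$ and let $\Psi:\mathcal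 D\to\mathbb R^{\mathcal G}$ be the unique linear map with $\sum_j\Psi_{ij}(\alpha,\beta)=\alpha_i$ for all $i$ and $\sum_i\Psi_{ij}(\alpha,\beta)=\beta_j$ for all $j$ (unique since $\mathcal G$ is a tree). Given $(\hat\imath,\hat\jmath)\in\mathcal E$, $B^n_1\in\mathbb R^{I\times I}$, $B^n_2\in\mathbb R^{I\times J}$ are the unique matrices such that column $\hat\jmath$ of $B^n_2$ is zero and $\sum_{j\in\mathcal J(i)}\mu^n_{ij}\Psi_{ij}(\alpha,\beta)=(B^n_1\alpha+B^n_2\beta)_i$ for all $i$ and all $(\alpha,\beta)\in\mathcal D$. $n$-th system in diffusion scale: for $x\in\mathbb Z^I_+$, the work-conserving action set is $\mathcal Z^n(x)=\{z\in\mathbb Z^{\mathcal G}_+: q_i\ge0,\ y_j\ge0,\ q_i\wedge y_j=0\ \forall(i,j)\in\mathcal E\}$ with $q_i=x_i-\sum_jz_{ij}$, $y_j=N^n_j-\sum_iz_{ij}$. Let $\bar z^n_{ij}=\xi^*_{ij}N^n_j$, $\bar x^n_i=\sum_j\bar z^n_{ij}$, $\mathcal S^n=\{\breve x\in\mathbb R^I:\sqrt n\breve x+\bar x^n\in\mathbb Z^I_+\}$, and $\breve{\mathcal Z}^n(\breve x)=\{\breve z:\sqrt n\breve z+\bar z^n\in\mathcal Z^n(\sqrt n\breve x+\bar x^n)\}$. Define $h^n_i:=n^{-1/2}(\lambda^n_i-\sum_{j\in\mathcal J(i)}\mu^n_{ij}\xi^*_{ij}N^n_j)$, the drift $b^n_i(\breve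 x,\breve z):=h^n_i-\sum_{j\in\mathcal J(i)}\mu^n_{ij}\breve z_{ij}$, $\breve q^n_i:=\breve x_i-\sum_j\breve z_{ij}$, $\breve y^n_j:=-\sum_i\breve z_{ij}$, and $\breve\zeta^n(\breve x,\breve z):=\langle e,\breve q^n\rangle\wedge\langle e,\breve y^n\rangle$. Here $e$ is the all-ones vector, $a^\pm$ are positive/negative parts, and $\Delta_I=\{u\in\mathbb R^I_+:\langle e,u\rangle=1\}$, $\Delta_J$ likewise. *)

(* Defs.v *)
From HB Require Import structures.
From mathcomp Require Import all_boot all_order all_algebra.
From mathcomp Require Import all_classical all_reals all_analysis.

Set Implicit Arguments.
Unset Strict Implicit.
Unset Printing Implicit Defensive.

Import Order.TTheory GRing.Theory Num.Theory.
Local Open Scope ring_scope.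

Section Defs.
Variables (R : realType) (I J : nat) (E : 'I_I -> 'I_J -> bool).

Definition bip_adj : rel ('I_I + 'I_J) :=
  fun u v => match u, v with
             | inl i, inr j => E i j
             | inr j, inl i => E i j
             | _, _ => false end.

Definition is_tree : Prop :=
  (forall u v, connect bip_adj u v) /\
  #|[set p : 'I_I * 'I_J | E p.1 p.2]| = (I + J).-1.

Definition in_RG (z : 'M[R]_(I, J)) : Prop := forall i j, ~~ E i j -> z i j = 0.

Definition lp_feasible (lam : 'I_I -> R) (mu : 'I_I -> 'I_J -> R)
  (nu : 'I_J -> R) (xi : 'M[R]_(I, J)) : Prop :=
  [/\ in_RG xi, (forall i j, 0 <= xi i j) &
      (forall i, \sum_j mu i j * nu j * xi i j = lam i)].

Definition lp_obj (xi : 'M[R]_(I, J)) : R := \big[Num.max/0]_j \sum_i xi i j.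

Definition lp_unique_solution lam mu nu (xs : 'M[R]_(I, J)) : Prop :=
  [/\ lp_feasible lam mu nu xs,
      (forall xi, lp_feasible lam mu nu xi -> lp_obj xs <= lp_obj xi) &
      (forall xi, lp_feasible lam mu nu xi -> lp_obj xi <= lp_obj xs -> xi = xs)].

Definition in_D (alpha : 'cV[R]_I) (beta : 'cV[R]_J) : Prop :=
  \sum_i alpha i 0 = \sum_j beta j 0.

Definition is_Psi (Psi : 'cV[R]_I -> 'cV[R]_J -> 'M[R]_(I, J)) : Prop :=
  forall alpha beta, in_D alpha beta ->
    [/\ in_RG (Psi alpha beta),
        (forall i, \sum_j Psi alpha beta i j = alpha i 0) &
        (forall j, \sum_i Psi alpha beta i j = beta j 0)].

Definition is_B (mu : 'I_I -> 'I_J -> R) (jh : 'I_J)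
  (Psi : 'cV[R]_I -> 'cV[R]_J -> 'M[R]_(I, J))
  (B1 : 'M[R]_I) (B2 : 'M[R]_(I, J)) : Prop :=
  (forall i, B2 i jh = 0) /\
  (forall alpha beta, in_D alpha beta -> forall i,
     \sum_(j | E i j) mu i j * Psi alpha beta i j = (B1 *m alpha + B2 *m beta) i 0).

Definition work_conserving (N : 'I_J -> nat) (x : 'I_I -> nat)
  (z : 'I_I -> 'I_J -> nat) : Prop :=
  [/\ (forall i j, ~~ E i j -> z i j = 0%N),
      (forall i, \sum_j z i j <= x i)%N,
      (forall j, \sum_i z i j <= N j)%N &
      (forall i j, E i j ->
         minn (x i - \sum_j' z i j') (N j - \sum_i' z i' j) = 0)%N].

Definition zbar (xs : 'M[R]_(I, J)) (N : 'I_J -> nat) : 'M[R]_(I, J) :=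
  \matrix_(i, j) (xs i j * (N j)%:R).

Definition xbar (xs : 'M[R]_(I, J)) (N : 'I_J -> nat) : 'cV[R]_I :=
  \col_i \sum_j zbar xs N i j.

Definition in_S (n : nat) xs N (xb : 'cV[R]_I) : Prop :=
  exists x : 'I_I -> nat,
    forall i, Num.sqrt (n%:R) * xb i 0 + xbar xs N i 0 = (x i)%:R.

Definition in_Zb (n : nat) xs N (xb : 'cV[R]_I) (zb : 'M[R]_(I, J)) : Prop :=
  exists (x : 'I_I -> nat) (z : 'I_I -> 'I_J -> nat),
    [/\ (forall i, Num.sqrt (n%:R) * xb i 0 + xbar xs N i 0 = (x i)%:R),
        (forall i j, Num.sqrt (n%:R) * zb i j + zbar xs N i j = (z i j)%:R) &
        work_conserving N x z].

Definition hvec (n : nat) (lamn : 'I_I -> R) (mun : 'I_I -> 'I_J -> R)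
  (xs : 'M[R]_(I, J)) (N : 'I_J -> nat) : 'cV[R]_I :=
  \col_i ((Num.sqrt (n%:R))^-1 *
           (lamn i - \sum_(j | E i j) mun i j * xs i j * (N j)%:R)).

Definition bvec (h : 'cV[R]_I) (mun : 'I_I -> 'I_J -> R) (zb : 'M[R]_(I, J))
  : 'cV[R]_I :=
  \col_i (h i 0 - \sum_(j | E i j) mun i j * zb i j).

Definition zeta (xb : 'cV[R]_I) (zb : 'M[R]_(I, J)) : R :=
  Num.min (\sum_i (xb i 0 - \sum_j zb i j)) (\sum_j (- \sum_i zb i j)).

Definition posp (a : R) : R := Num.max a 0.
Definition negp (a : R) : R := Num.max (- a) 0.

Definition in_simplex (k : nat) (u : 'cV[R]_k) : Prop :=
  (forall i, 0 <= u i 0) /\ \sum_i u i 0 = 1.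

End Defs.

(* Main.v *)
Require Import Defs.
From HB Require Import structures.
From mathcomp Require Import all_boot all_order all_algebra.
From mathcomp Require Import fingroup perm.
From mathcomp Require Import all_classical all_reals all_analysis.
Import Order.TTheory GRing.Theory Num.Theory.
Import numFieldNormedType.Exports.
Local Open Scope classical_set_scope.
Local Open Scope ring_scope.
From mathcomp Require Import zify ring lra.

Local Close Scope classical_set_scope.
Section Graph.
Variables (R : realType) (I J : nat) (E : 'I_I -> 'I_J -> bool) (ih : 'I_I) (jh : 'I_J).
Hypothesis conn : forall u v, connect (bip_adj E) u v.
Hypothesis card_edges : #|[set p : 'I_I * 'I_J | E p.1 p.2]| = (I + J).-1.

Local Notation V := ('I_I + 'I_J)%type.
Local Notation r := (inr jh : V).

Definition dpred (v : V) : pred nat := fun n =>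
  `[< exists p : seq V, [/\ path (bip_adj E) v p, last v p = r & size p = n] >].

Lemma dpred_ex v : exists n, dpred v n.
Proof.
have /connectP [p pp lp] := conn v r.
by exists (size p); apply/asboolP; exists p.
Qed.

Definition dist v := ex_minn (dpred_ex v).

Lemma dist_le v n : dpred v n -> (dist v <= n)%N.
Proof. rewrite /dist; case: ex_minnP => m _ H; exact: H. Qed.

Lemma dist_spec v : exists p : seq V, [/\ path (bip_adj E) v p, last v p = r & size p = dist v].
Proof. rewrite /dist; case: ex_minnP => m /asboolP H _; exact: H. Qed.

Lemma dist0 v : dist v = 0%N -> v = r.
Proof. have [[|w p] [_ lp sp]] := dist_spec v; by [rewrite -lp | rewrite -sp]. Qed.

Lemma dist_adj v : v != r -> exists w, bip_adj E v w && (dist w < dist v)%N.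
Proof.
move=> vr; have [[|w p] [pp lp sp]] := dist_spec v.
  by rewrite /= in lp; rewrite lp eqxx in vr.
move: pp => /= /andP [a pp]; exists w; rewrite a /= -sp /=.
by apply: dist_le; apply/asboolP; exists p.
Qed.

Definition par (v : V) : V := odflt v [pick w | bip_adj E v w && (dist w < dist v)%N].

Lemma par_spec v : v != r -> bip_adj E v (par v) && (dist (par v) < dist v)%N.
Proof.
move=> /dist_adj [w Hw]; rewrite /par; case: pickP => [x -> //|H].
by rewrite H in Hw.
Qed.

Lemma par_inl i : exists j, par (inl i) = inr j /\ E i j /\ (dist (inr j) < dist (inl i))%N.
Proof.
have /andP [a d] := par_spec (inl i) isT.
by move: a d; case: (par (inl i)) => // j a d; exists j.
Qed.

Lemma par_inr j : inr j != r -> exists i, par (inr j) = inl i /\ E i j /\ (dist (inl i) < dist (inr j))%N.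
Proof.
move=> /par_spec /andP [a d].
by move: a d; case: (par (inr j)) => // i a d; exists i.
Qed.

Definition pe (v : V) : 'I_I * 'I_J :=
  match v, par v with
  | inl i, inr j => (i, j)
  | inr j, inl i => (i, j)
  | _, _ => (ih, jh) end.

Lemma pe_inj : {in [set~ r] &, injective pe}.
Proof.
move=> v w vr wr; rewrite !inE in vr wr.
case: v vr => [i|j] vr; case: w wr => [i'|j'] wr.
- have [j [e1 _]] := par_inl i; have [j1 [e2 _]] := par_inl i'.
  by rewrite /pe e1 e2 => -[->].
- have [j [e1 [_ d1]]] := par_inl i; have [i1 [e2 [_ d2]]] := par_inr _ wr.
  rewrite /pe e1 e2 => -[h1 h2]; subst.
  by move: (ltn_trans d1 d2); rewrite ltnn.
- have [i1 [e2 [_ d2]]] := par_inr _ vr; have [j2 [e1 [_ d1]]] := par_inl i'.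
  rewrite /pe e1 e2 => -[h1 h2]; subst.
  by move: (ltn_trans d1 d2); rewrite ltnn.
- have [i1 [e1 _]] := par_inr _ vr; have [i2 [e2 _]] := par_inr _ wr.
  by rewrite /pe e1 e2 => -[_ ->].
Qed.

Lemma edge_cases i j : E i j ->
  par (inl i) = inr j \/ (inr j != r /\ par (inr j) = inl i).
Proof.
move=> eij.
have sub : [set pe v | v in [set~ r]] \subset [set p : 'I_I * 'I_J | E p.1 p.2].
  apply/fintype.subsetP => x /imsetP [v]; rewrite !inE => vr ->.
  case: v vr => [i1|j1] vr.
    by have [j3 [e1 [e _]]] := par_inl i1; rewrite /pe e1.
  by have [i3 [e1 [e _]]] := par_inr _ vr; rewrite /pe e1.
have cd : #|[set pe v | v in [set~ r]]| = #|[set p : 'I_I * 'I_J | E p.1 p.2]|.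
  by rewrite card_in_imset ?cardsC1 ?card_sum ?card_ord ?card_edges //; apply: pe_inj.
have H : (i, j) \in [set pe v | v in [set~ r]] by rewrite (subset_cardP cd sub) inE.
case/imsetP: H => v; rewrite !inE => vr; case: v vr => [i1|j1] vr.
  have [j2 [e1 _]] := par_inl i1; rewrite /pe e1 => -[-> ->]; by left.
have [i2 [e1 _]] := par_inr _ vr; rewrite /pe e1 => -[-> ->]; by right.
Qed.


Definition depth i j := maxn (dist (inl i)) (dist (inr j)).
Definition Kmax := \big[maxn/0%N]_(v : V) dist v.

Lemma flow0 (w : 'M[R]_(I, J)) : in_RG E w ->
  (forall i, \sum_j w i j = 0) -> (forall j, \sum_i w i j = 0) -> w = 0.
Proof.
move=> hG hr hc.
have dK v : (dist v <= Kmax)%N by exact: leq_bigmax.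
suff H : forall n i j, E i j -> (Kmax - depth i j < n)%N -> w i j = 0.
  apply/matrixP => i j; rewrite mxE.
  case eij: (E i j); last by apply: hG; rewrite eij.
  by apply: (H (Kmax - depth i j).+1).
elim=> // n IH i j eij hn.
have [pij|[jr pji]] := edge_cases _ _ eij.
-
  have /eqP := hr i; rewrite (bigD1 j) //= big1 ?addr0 => [/eqP //|j' nj'].
  case eij': (E i j'); last by apply: hG; rewrite eij'.
  have [pij'|[jr' pji']] := edge_cases _ _ eij'.
    by move: nj'; rewrite pij in pij'; case: pij' => ->; rewrite eqxx.
  apply: IH => //.
  have [x1 [p1 [_ d1]]] := par_inr _ jr'; rewrite pji' in p1; case: p1 => p1; subst x1.
  have [x2 [pp [_ d2]]] := par_inl i; rewrite pij in pp; case: pp => pp; subst x2.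
  move: (dK (inl i)) (dK (inr j')) (dK (inr j)) hn d1 d2; rewrite /depth; move: (dist (inl i)) (dist (inr j')) (dist (inr j)) Kmax => a b c k; lia.
- have /eqP := hc j; rewrite (bigD1 i) //= big1 ?addr0 => [/eqP //|i' ni'].
  case eij': (E i' j); last by apply: hG; rewrite eij'.
  have [pij'|[jr' pji']] := edge_cases _ _ eij'; last first.
    by move: ni'; rewrite pji in pji'; case: pji' => ->; rewrite eqxx.
  apply: IH => //.
  have [x1 [pp [_ d1]]] := par_inl i'; rewrite pij' in pp; case: pp => pp; subst x1.
  have [x2 [p2 [_ d2]]] := par_inr _ jr; rewrite pji in p2; case: p2 => p2; subst x2.
  move: (dK (inl i)) (dK (inl i')) (dK (inr j)) hn d1 d2; rewrite /depth; move: (dist (inl i)) (dist (inl i')) (dist (inr j)) Kmax => a b c k; lia.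
Qed.

Lemma flow_uniq (A B : 'M[R]_(I, J)) : in_RG E A -> in_RG E B ->
  (forall i, \sum_j A i j = \sum_j B i j) -> (forall j, \sum_i A i j = \sum_i B i j) -> A = B.
Proof.
move=> hA hB hr hc; apply/eqP; rewrite -subr_eq0; apply/eqP; apply: flow0.
- by move=> i j eij; rewrite !mxE (hA _ _ eij) (hB _ _ eij) subrr.
- by move=> i; under eq_bigr do rewrite !mxE; rewrite sumrB hr subrr.
- by move=> j; under eq_bigr do rewrite !mxE; rewrite sumrB hc subrr.
Qed.


Lemma sum_delta_r (a : 'I_I) (b : 'I_J) i : \sum_j (delta_mx a b : 'M[R]_(I,J)) i j = (i == a)%:R.
Proof.
rewrite (bigD1 b) //= big1 ?addr0 => [|j nj]; first by rewrite mxE eqxx andbT.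
by rewrite mxE (negbTE nj) andbF.
Qed.

Lemma sum_delta_c (a : 'I_I) (b : 'I_J) j : \sum_i (delta_mx a b : 'M[R]_(I,J)) i j = (j == b)%:R.
Proof.
rewrite (bigD1 a) //= big1 ?addr0 => [|i ni]; first by rewrite mxE eqxx.
by rewrite mxE (negbTE ni).
Qed.

Lemma delta_RG (a : 'I_I) (b : 'I_J) : E a b -> in_RG E (delta_mx a b : 'M[R]_(I,J)).
Proof.
move=> eab i j nij; rewrite mxE; case: eqP => [ei|] //; case: eqP => [ej|] //=.
by subst; rewrite eab in nij.
Qed.

Lemma sr_add (A B : 'M[R]_(I,J)) i : \sum_j (A + B) i j = \sum_j A i j + \sum_j B i j.
Proof. by rewrite -big_split; apply: eq_bigr => j _; rewrite mxE. Qed.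
Lemma sr_opp (A : 'M[R]_(I,J)) i : \sum_j (- A) i j = - \sum_j A i j.
Proof. by rewrite -sumrN; apply: eq_bigr => j _; rewrite mxE. Qed.
Lemma sc_add (A B : 'M[R]_(I,J)) j : \sum_i (A + B) i j = \sum_i A i j + \sum_i B i j.
Proof. by rewrite -big_split; apply: eq_bigr => i _; rewrite mxE. Qed.
Lemma sc_opp (A : 'M[R]_(I,J)) j : \sum_i (- A) i j = - \sum_i A i j.
Proof. by rewrite -sumrN; apply: eq_bigr => i _; rewrite mxE. Qed.

Lemma flow_ex n k : (dist (inl k) < n)%N -> exists F : 'M[R]_(I,J),
  [/\ in_RG E F, (forall i, \sum_j F i j = (i == k)%:R),
      (forall j, \sum_i F i j = (j == jh)%:R),
      (forall i j, F i j != 0 -> i = k \/ (dist (inl i) < dist (inl k))%N) &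
      exists pk, [/\ E k pk, (dist (inr pk) < dist (inl k))%N &
                     forall j, F k j = (j == pk)%:R]].
Proof.
elim: n k => // n IH k hk.
have [j [pk [ekj dj]]] := par_inl k.
have [ejh|njh] := eqVneq j jh.
  subst j; exists (delta_mx k jh); split.
  - exact: delta_RG.
  - exact: sum_delta_r.
  - exact: sum_delta_c.
  - move=> i j; rewrite mxE; have [->|nik] := eqVneq i k; first by left.
    by rewrite /= eqxx.
  - by exists jh; split => // j; rewrite mxE eqxx.
have jr : inr j != r by apply: contra njh => /eqP [->].
have [k' [pj [ek'j dk']]] := par_inr _ jr.
have dkk : (dist (inl k') < dist (inl k))%N by apply: ltn_trans dk' dj.
have nkk : k' != k by apply: contraTneq dkk => ->; rewrite ltnn.
have [F [FG Fr Fc Fs [pk' [_ _ Fk]]]] := IH k' (leq_trans dkk hk).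
exists (delta_mx k j - delta_mx k' j + F); split.
- move=> i j0 n0; have d1 := delta_RG _ _ ekj _ _ n0; have d2 := delta_RG _ _ ek'j _ _ n0.
  have f0 := FG _ _ n0; rewrite !mxE in d1 d2 f0 *; rewrite d1 d2 f0; lra.
- move=> i; rewrite !sr_add sr_opp !sum_delta_r Fr.
  by rewrite addrNK.
- move=> j0; rewrite !sc_add sc_opp !sum_delta_c Fc.
  by rewrite subrr add0r.
- move=> i j0 hne; have [->|nik] := eqVneq i k; first by left.
  right; have [->|nik'] := eqVneq i k'; first by [].
  move: hne; rewrite !mxE (negbTE nik) (negbTE nik') /= subrr add0r => /Fs [ek|d].
    by rewrite ek eqxx in nik'.
  exact: ltn_trans d dkk.
- exists j; split => // j0.
  have Fk0 : F k j0 = 0.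
    apply/eqP; apply: contraTT isT => /Fs [ek|d].
      by rewrite ek eqxx in nkk.
    by move: (ltn_trans d dkk); rewrite ltnn.
  have nkk' : (k == k') = false by apply/negbTE; rewrite eq_sym.
  by rewrite !mxE Fk0 eqxx nkk' /= subr0 addr0.
Qed.


Lemma B1col (mn : 'I_I -> 'I_J -> R) Psi (B1 : 'M[R]_I) (B2 : 'M[R]_(I,J)) :
  is_Psi E Psi -> is_B E mn jh Psi B1 B2 -> forall k, exists F : 'M[R]_(I,J),
  [/\ (forall i j, F i j != 0 -> i = k \/ (dist (inl i) < dist (inl k))%N),
      (exists pk, [/\ E k pk, (dist (inr pk) < dist (inl k))%N &
                     forall j, F k j = (j == pk)%:R]) &
      forall i, B1 i k = \sum_(j | E i j) mn i j * F i j].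
Proof.
move=> hP [hB2 hB] k.
have [F [FG Fr Fc Fs Fk]] := flow_ex _ _ (ltnSn (dist (inl k))).
exists F; split => // i.
have hD : in_D (delta_mx k 0 : 'cV[R]_I) (delta_mx jh 0 : 'cV[R]_J).
  rewrite /in_D.
  have -> : \sum_i0 (delta_mx k 0 : 'cV[R]_I) i0 0 = 1.
    rewrite (bigD1 k) //= big1 ?addr0 => [|i0 ni]; first by rewrite mxE !eqxx.
    by rewrite mxE (negbTE ni).
  rewrite (bigD1 jh) //= big1 ?addr0 => [|i0 ni]; first by rewrite mxE !eqxx.
  by rewrite mxE (negbTE ni).
have [PG Pr Pc] := hP _ _ hD.
have eF : Psi (delta_mx k 0) (delta_mx jh 0) = F.
  apply: flow_uniq => // [i0|j0]; first by rewrite Pr Fr mxE andbT.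
  by rewrite Pc Fc mxE andbT.
have := hB _ _ hD i; rewrite eF => ->.
by rewrite -!colE !mxE hB2 addr0.
Qed.

Lemma dist_ih : E ih jh -> (dist (inl ih) <= 1)%N.
Proof.
move=> e; apply: dist_le; apply/asboolP; exists [:: inr jh]; split => //=.
by rewrite andbT.
Qed.

Definition code (i : 'I_I) := ((if i == ih then 0 else (dist (inl i)).+1) * I + i)%N.
Definition tf (i : 'I_I) := #|[set k | (code i < code k)%N]|.

Lemma tf_lt i : (tf i < I)%N.
Proof.
have sub : [set k | (code i < code k)%N] \subset [set~ i].
  by apply/fintype.subsetP => k; rewrite !inE; apply: contraTneq => ->; rewrite ltnn.
have := subset_leq_card sub; rewrite cardsC1 card_ord /tf.
move: (ltn_ord i); lia.
Qed.

Lemma code_inj : injective code.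
Proof.
move=> i k e; apply: val_inj => /=.
have : (code i %% I = code k %% I)%N by rewrite e.
by rewrite /code !modnMDl !modn_small.
Qed.

Lemma tf_mono i k : (code i < code k)%N -> (tf k < tf i)%N.
Proof.
move=> h; apply: proper_card; apply/properP; split.
  apply/fintype.subsetP => l; rewrite !inE; exact: ltn_trans.
by exists k; rewrite !inE ?ltnn.
Qed.

Definition tfo i : 'I_I := Ordinal (tf_lt i).

Lemma tfo_inj : injective tfo.
Proof.
move=> i k /(congr1 val) /= e.
case: (ltngtP (code i) (code k)) => h.
- by move: (tf_mono _ _ h); rewrite e ltnn.
- by move: (tf_mono _ _ h); rewrite e ltnn.
- exact: code_inj.
Qed.

Lemma perm_ex : exists s : {perm 'I_I},
  [/\ nat_of_ord (s ih) = I.-1 &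
      forall i k, i != ih -> k != ih -> (dist (inl i) < dist (inl k))%N ->
        (s k < s i)%N].
Proof.
exists (perm tfo_inj); split.
  rewrite permE /= /tf.
  have -> : [set k | (code ih < code k)%N] = [set~ ih].
    apply/setP => k; rewrite !inE /code eqxx mul0n add0n.
    case: eqVneq => [->|nk]; first by rewrite mul0n add0n ltnn.
    rewrite /=; apply/idP; move: (ltn_ord ih); move: (dist (inl k)) => d; nia.
  by rewrite cardsC1 card_ord.
move=> i k ni nk d; rewrite !permE /=; apply: tf_mono.
rewrite /code (negbTE ni) (negbTE nk).
have := ltn_ord i; have := ltn_ord k; move: d.
move: (dist (inl i)) (dist (inl k)) (nat_of_ord i) (nat_of_ord k) => a b c e; nia.
Qed.

End Graph.

Lemma simplex_ex (R : realType) (k : nat) (a : 'I_k) (v : 'cV[R]_k) :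
  (forall i, 0 <= v i 0) -> exists u, in_simplex u /\ (\sum_i v i 0) *: u = v.
Proof.
move=> hv; have [Q0|QN] := eqVneq (\sum_i v i 0) 0.
  exists (delta_mx a 0); split.
    split; first by move=> i; rewrite mxE ler0n.
    rewrite (bigD1 a) //= big1 ?addr0 => [|i ni]; first by rewrite mxE !eqxx.
    by rewrite mxE (negbTE ni).
  rewrite Q0 scale0r; apply/matrixP => i j; rewrite ord1 !mxE.
  by rewrite (psumr_eq0P (P := predT) (fun i _ => hv i) Q0).
exists ((\sum_i v i 0)^-1 *: v); split; last by rewrite scalerA mulfV // scale1r.
split; first by move=> i; rewrite mxE mulr_ge0 // invr_ge0 sumr_ge0.
by rewrite -[RHS](mulVf QN) mulr_sumr; apply: eq_bigr => i _; rewrite mxE.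
Qed.

Lemma maxmin (R : realType) (Q Y : R) :
  Num.max (Q - Y) 0 + Num.min Q Y = Q /\ Num.max (- (Q - Y)) 0 + Num.min Q Y = Y.
Proof.
rewrite /Num.max /Num.min; case: ifP; case: ifP; case: ifP => *; split; lra.
Qed.

Local Open Scope classical_set_scope.
Theorem proposition1 (R : realType) (I J : nat) (E : 'I_I -> 'I_J -> bool)
  (lamn : nat -> 'I_I -> R) (mun : nat -> 'I_I -> 'I_J -> R)
  (Nn : nat -> 'I_J -> nat)
  (lam : 'I_I -> R) (mu : 'I_I -> 'I_J -> R) (nu : 'I_J -> R)
  (xs : 'M[R]_(I, J)) :
  is_tree E ->
  (forall m i, 0 < lamn m i) ->
  (forall m i j, E i j -> 0 < mun m i j) ->
  (forall i, 0 < lam i) -> (forall j, 0 < nu j) ->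
  (forall i j, E i j -> 0 < mu i j) ->
  (forall i, (fun m : nat => lamn m i / m%:R) @ \oo --> lam i) ->
  (forall j, (fun m : nat => (Nn m j)%:R / m%:R) @ \oo --> nu j) ->
  (forall i j, E i j -> (fun m : nat => mun m i j) @ \oo --> mu i j) ->
  (forall i, exists l : R,
     (fun m : nat => (lamn m i - m%:R * lam i) / Num.sqrt m%:R) @ \oo --> l) ->
  (forall i j, E i j -> exists l : R,
     (fun m : nat => Num.sqrt m%:R * (mun m i j - mu i j)) @ \oo --> l) ->
  (forall j, exists l : R,
     (fun m : nat => Num.sqrt m%:R * ((Nn m j)%:R / m%:R - nu j)) @ \oo --> l) ->
  lp_unique_solution E lam mu nu xs ->
  (forall j, \sum_i xs i j = 1) ->
  (forall i j, E i j -> 0 < xs i j) ->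
  forall (n : nat), (0 < n)%N ->
  forall (ih : 'I_I) (jh : 'I_J), E ih jh ->
  forall (Psi : 'cV[R]_I -> 'cV[R]_J -> 'M[R]_(I, J)), is_Psi E Psi ->
  forall (B1 : 'M[R]_I) (B2 : 'M[R]_(I, J)), is_B E (mun n) jh Psi B1 B2 ->
  forall (xb : 'cV[R]_I) (zb : 'M[R]_(I, J)),
  in_S n xs (Nn n) xb ->
  in_Zb E n xs (Nn n) xb zb ->
  [/\ (exists (uc : 'cV[R]_I) (us : 'cV[R]_J),
         [/\ in_simplex uc, in_simplex us &
           let h := hvec E n (lamn n) (mun n) xs (Nn n) in
           let sx := \sum_i xb i 0 in
           bvec E h (mun n) zb =
             h - B1 *m (xb - posp sx *: uc) + negp sx *: (B2 *m us)
               + zeta xb zb *: (B1 *m uc + B2 *m us)]),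
      (forall i, B2 i jh = 0) &
      (exists s : {perm 'I_I},
         [/\ nat_of_ord (s ih) = I.-1,
             (forall i k, (nat_of_ord (s i) < nat_of_ord (s k))%N -> B1 i k = 0),
             (forall i, 0 < B1 i i) &
             B1 ih ih = mun n ih jh])].
Proof.
move=> [conn cardE] _ hpos _ _ _ _ _ _ _ _ _ hlp hxs1 _ n n0 ih jh Eh Psi hP B1 B2 hB.
move=> xb zb _ [x [z [hx hz [zoff rowle colle _]]]].
have [[xsG _ _] _ _] := hlp.
have sq0 : 0 < Num.sqrt (n%:R : R) by rewrite sqrtr_gt0 ltr0n.
have zbar_off i j : ~~ E i j -> zbar xs (Nn n) i j = 0 by move=> e; rewrite mxE xsG // mul0r.
have zbG : in_RG E zb.
  move=> i j e; have := hz i j; rewrite zoff // zbar_off // addr0 => /eqP.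
  by rewrite mulf_eq0 (gt_eqF sq0) /= => /eqP.
split; last first.
- have [s [sih sord]] := perm_ex I J E ih jh conn cardE.
  exists s; split => //.
  + move=> i k hik; have [F [Fs _ ->]] := B1col R I J E ih jh conn cardE (mun n) Psi B1 B2 hP hB k.
    apply: big1 => j _; apply/eqP; rewrite mulf_eq0; apply/orP; right.
    apply: contraTT hik => /Fs [eik|d]; first by rewrite eik ltnn.
    rewrite -leqNgt.
    have [eih|nih] := eqVneq i ih.
      by rewrite eih sih; move: (ltn_ord (s k)); lia.
    have [ekh|nkh] := eqVneq k ih.
      subst k; have := dist_ih I J E ih jh conn Eh; move: d.
      case h0: (dist I J E jh conn (inl i)) => [|m] d1 d2.
        by have := dist0 I J E jh conn _ h0.
      by move: d1 d2; lia.
    exact: ltnW (sord _ _ nih nkh d).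
  + move=> i; have [F [_ [pk [epk _ Fk]] ->]] := B1col R I J E ih jh conn cardE (mun n) Psi B1 B2 hP hB i.
    rewrite (bigD1 pk) //= Fk eqxx mulr1 big1 ?addr0; first exact: hpos.
    by move=> j /andP [_ nj]; rewrite Fk (negbTE nj) mulr0.
  + have [F [_ [pk [epk dpk Fk]] ->]] := B1col R I J E ih jh conn cardE (mun n) Psi B1 B2 hP hB ih.
    have pkh : pk = jh.
      have := dist_ih I J E ih jh conn Eh; move: dpk.
      case h0: (dist I J E jh conn (inr pk)) => [|m] d1 d2; last by move: d1 d2; lia.
      by have := dist0 I J E jh conn _ h0; case.
    subst pk; rewrite (bigD1 jh) //= Fk eqxx mulr1 big1 ?addr0 //.
    by move=> j /andP [_ nj]; rewrite Fk (negbTE nj) mulr0.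
- exact: hB.1.
set sq := Num.sqrt (n%:R : R).
pose alpha : 'cV[R]_I := \col_i \sum_j zb i j.
pose beta : 'cV[R]_J := \col_j \sum_i zb i j.
pose qv : 'cV[R]_I := \col_i (xb i 0 - \sum_j zb i j).
pose yv : 'cV[R]_J := \col_j (- \sum_i zb i j).
have hD : in_D alpha beta.
  rewrite /in_D; under eq_bigr do rewrite mxE.
  under [RHS]eq_bigr do rewrite mxE; exact: exchange_big.
have [PG Pr Pc] := hP _ _ hD.
have ePsi : Psi alpha beta = zb.
  apply: (flow_uniq R I J E ih jh conn cardE) => // [i|j]; first by rewrite Pr mxE.
  by rewrite Pc mxE.
have key : \col_i (\sum_(j | E i j) mun n i j * zb i j) = B1 *m alpha + B2 *m beta.
  apply/matrixP => i j; rewrite ord1 [LHS]mxE -(hB.2 _ _ hD i) ePsi //.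
have qpos : forall i, 0 <= qv i 0.
  move=> i; rewrite mxE -(pmulr_rge0 _ sq0).
  have e1 : sq * xb i 0 = (x i)%:R - xbar xs (Nn n) i 0 by rewrite -hx addrK.
  have e2 j : sq * zb i j = (z i j)%:R - zbar xs (Nn n) i j by rewrite -hz addrK.
  rewrite mulrBr mulr_sumr e1 (eq_bigr _ (fun j _ => e2 j)) sumrB -natr_sum.
  have -> : xbar xs (Nn n) i 0 = \sum_j zbar xs (Nn n) i j by rewrite mxE.
  have := rowle i; rewrite -(ler_nat R) => hle.
  set S1 := \sum_j _; set S2 := (\sum_j _)%:R; lra.
have ypos : forall j, 0 <= yv j 0.
  move=> j; rewrite mxE -(pmulr_rge0 _ sq0).
  have e2 i : sq * zb i j = (z i j)%:R - zbar xs (Nn n) i j by rewrite -hz addrK.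
  rewrite mulrN mulr_sumr (eq_bigr _ (fun i _ => e2 i)) sumrB -natr_sum.
  have -> : \sum_i zbar xs (Nn n) i j = (Nn n j)%:R.
    under eq_bigr do rewrite mxE; by rewrite -mulr_suml hxs1 mul1r.
  have := colle j; rewrite -(ler_nat R) => hle; lra.
have [uc [uS euc]] := simplex_ex _ _ ih _ qpos.
have [us [usS eus]] := simplex_ex _ _ jh _ ypos.
exists uc, us; split => // h sx.
set Q := \sum_i qv i 0 in euc; set Y := \sum_j yv j 0 in eus.
have eQ : Q = \sum_i (xb i 0 - \sum_j zb i j) by apply: eq_bigr => i _; rewrite mxE.
have eY : Y = \sum_j (- \sum_i zb i j) by apply: eq_bigr => j _; rewrite mxE.
have ezeta : zeta xb zb = Num.min Q Y by rewrite /zeta -eQ -eY.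
have esx : sx = Q - Y.
  rewrite eQ eY sumrB sumrN opprK (exchange_big _ _ _ _ _ (fun i j => zb i j)).
  by rewrite subrK.
have eb : bvec E h (mun n) zb = h - (B1 *m alpha + B2 *m beta).
  rewrite -key; apply/matrixP => i j; rewrite ord1 !mxE //.
have ea : alpha = xb - Q *: uc.
  rewrite euc; apply/matrixP => i j; rewrite ord1 !mxE; lra.
have eB : beta = - (Y *: us).
  rewrite eus; apply/matrixP => i j; rewrite ord1 !mxE opprK //.
rewrite eb ea eB ezeta /posp /negp esx.
have [hp hn] := maxmin _ Q Y.
move: (Num.max (Q - Y) 0) (Num.min Q Y) (Num.max (- (Q - Y)) 0) hp hn => p zz m hp hn.
rewrite -hp -hn !mulmxBr mulmxN -!scalemxAr.
move: (B1 *m xb) (B1 *m uc) (B2 *m us) => a b c.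
apply/matrixP => i j; rewrite !mxE; ring.
Qed.
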